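(* For every topological space $X$, the games $G_1(\mathcal{C}_\mathcal{O},\mathcal{C}_\mathcal{O})$ and $G_1(\mathcal{C}_X, \neg \mathcal{C}_\mathcal{O})$ are dual; that is: (i) Alice has a winning strategy in $G_1(\mathcal{C}_\mathcal{O},\mathcal{C}_\mathcal{O})$ iff Bob has a winning strategy in $G_1(\mathcal{C}_X, \neg \mathcal{C}_\mathcal{O})$, and Alice has a winning strategy in $G_1(\mathcal{C}_X, \neg \mathcal{C}_\mathcal{O})$ iff Bob has a winning strategy in $G_1(\mathcal{C}_\mathcal{O},\mathcal{C}_\mathcal{O})$; (ii) Alice has a winning predetermined strategy in $G_1(\mathcal{C}_\mathcal{O},\mathcal{C}_\mathcal{O})$ iff Bob has a winning Markov strategy in $G_1(\mathcal{C}_X, \neg \mathcal{C}_\mathcal{O})$, and Alice has a winning predetermined strategy in $G_1(\mathcal{C}_X, \neg \mathcal{C}_\mathcal{O})$ iff Bob has a winning Markov strategy in $G_1(\mathcal{C}_\mathcal{O},\mathcal{C}_\mathcal{O})$.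
   Context: $\mathcal{C}_\mathcal{O}$ is the collection of all covers of $X$ by clopen sets. For $x\in X$, $\mathcal{C}_{\mathcal{T}_{X,x}}$ is the set of nonempty clopen subsets of $X$ containing $x$, and $\mathcal{C}_X=\{\mathcal{C}_{\mathcal{T}_{X,x}}:x\in X\}$. For families $\mathcal{A},\mathcal{B}$, the game $G_1(\mathcal{A},\mathcal{B})$: in each inning $n\in\omega$ Alice chooses $A_n\in\mathcal{A}$ and Bob chooses $B_n\in A_n$; Bob wins if $\{B_n:n\in\omega\}\in\mathcal{B}$, Alice otherwise. $G_1(\mathcal{A},\neg\mathcal{B})$ denotes $G_1(\mathcal{A},\mathcal{P}(\bigcup\mathcal{A})\setminus\mathcal{B})$. A strategy for Alice is a function $\sigma$ from finite sequences of elements of $\bigcup\mathcal{A}$ to $\mathcal{A}$; it is winning if whenever $x_n\in\sigma(\langle x_i:i<n\rangle)$ for all $n$, $\{x_n:n\in\omega\}\notin\mathcal{B}$. A strategy for Bob is a function $\tau$ from finite sequences $\langle A_0,\dots,A_n\rangle$ of elements of $\mathcal{A}$ to $\bigcup\mathcal{A}$ with $\tau(A_0,\dots,A_n)\in A_n$; it is winning if for all such sequences $\{\tau(A_0,\dots,A_n):n\in\omega\}\in\mathcal{B}$. A predetermined strategy for Alice is a function $\sigma:\omega\to\mathcal{A}$ (her move at inning $n$ is $\sigma(n)$). A Markov strategy for Bob is a function $\tau:\mathcal{A}\times\omega\to\bigcup\mathcal{A}$ with $\tau(A,n)\in A$ (his move at inning $n$ is $\tau(A_n,n)$). *)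

(* Defs.v *)
From mathcomp Require Import all_boot all_classical.
From mathcomp Require Import topology.
From Stdlib Require Import List.

Set Implicit Arguments.
Unset Strict Implicit.
Unset Printing Implicit Defensive.
Local Open Scope classical_set_scope.

Section Games.
Variable U : Type.
Implicit Types (A B : set (set U)).

Definition UnionFam A : set U := [set y | exists2 a, A a & a y].

(* G_1(A, not B) := G_1(A, P(\bigcup A) \ B) *)
Definition negB A B : set (set U) :=
  [set S | S `<=` UnionFam A /\ ~ B S].

Definition prefix (x : nat -> U) (n : nat) : list U := map x (iota 0 n).
Definition prefixS (a : nat -> set U) (n : nat) : list (set U) := map a (iota 0 n).

Definition AliceStrategy A (sigma : list U -> set U) : Prop :=
  forall s, Forall (UnionFam A) s -> A (sigma s).

Definition AliceWinning A B (sigma : list U -> set U) : Prop :=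
  AliceStrategy A sigma /\
  forall x : nat -> U, (forall n, sigma (prefix x n) (x n)) -> ~ B (range x).

Definition BobStrategy A (tau : list (set U) -> U) : Prop :=
  forall (s : list (set U)) (a : set U), Forall A s -> A a -> a (tau (s ++ a :: nil)).

Definition BobWinning A B (tau : list (set U) -> U) : Prop :=
  BobStrategy A tau /\
  forall a : nat -> set U, (forall n, A (a n)) ->
    B (range (fun n => tau (prefixS a n.+1))).

Definition AliceHasWS A B := exists sigma, AliceWinning A B sigma.
Definition BobHasWS A B := exists tau, BobWinning A B tau.

Definition AliceWinningPre A B (sigma : nat -> set U) : Prop :=
  (forall n, A (sigma n)) /\
  forall x : nat -> U, (forall n, sigma n (x n)) -> ~ B (range x).

Definition BobWinningMarkov A B (tau : set U -> nat -> U) : Prop :=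
  (forall a n, A a -> a (tau a n)) /\
  forall a : nat -> set U, (forall n, A (a n)) ->
    B (range (fun n => tau (a n) n)).

Definition AliceHasWPre A B := exists sigma, AliceWinningPre A B sigma.
Definition BobHasWMarkov A B := exists tau, BobWinningMarkov A B tau.
End Games.

Section Families.
Variable X : topologicalType.

Definition clopen_covers : set (set (set X)) :=
  [set U | (forall A, U A -> clopen A) /\ UnionFam U = setT].

Definition clopen_nbhds (x : X) : set (set X) :=
  [set A | clopen A /\ A !=set0 /\ A x].

Definition clopen_nbhd_families : set (set (set X)) :=
  [set clopen_nbhds x | x in setT].
End Families.

Arguments clopen_covers X : clear implicits.
Arguments clopen_nbhd_families X : clear implicits.

(* Main.v *)
Require Import Defs.
From mathcomp Require Import all_boot all_classical.
From mathcomp Require Import topology.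
From Stdlib Require Import List.
Set Implicit Arguments.
Unset Strict Implicit.
Local Open Scope classical_set_scope.

Lemma pre_S (T : Type) (a : nat -> T) n :
  Defs.prefix a n.+1 = app (Defs.prefix a n) (a n :: nil).
Proof.
rewrite /Defs.prefix -addn1 iotaD /=.
elim: (iota 0 n) => [|x s IH] //=. by rewrite IH.
Qed.

Definition run (V W : Type) (r : list V -> W -> V) (s : list W) : list V :=
  fold_left (fun acc w => app acc (r acc w :: nil)) s nil.

Lemma run_snoc V W (r : list V -> W -> V) s w :
  run r (app s (w :: nil)) = app (run r s) (r (run r s) w :: nil).
Proof. by rewrite /run fold_left_app. Qed.

Lemma run_Forall V W (r : list V -> W -> V) (P : V -> Prop) :
  (forall p w, P (r p w)) -> forall s, Forall P (run r s).
Proof.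
move=> HP s; rewrite /run.
suff : forall acc, Forall P acc -> Forall P (fold_left (fun acc w => app acc (r acc w :: nil)) s acc) by apply.
elim: s => [|w s IH] acc Hacc //=.
apply: IH; apply/Forall_app; split => //; constructor => //.
Qed.

Lemma run_prefix V W (r : list V -> W -> V) (a : nat -> W) n :
  run r (Defs.prefix a n) = Defs.prefix (fun k => r (run r (Defs.prefix a k)) (a k)) n.
Proof.
elim: n => [|n IH] //.
by rewrite !pre_S run_snoc IH.
Qed.

Definition chooseD (T : Type) (d : T) (P : T -> Prop) : T :=
  match pselect (exists x, P x) with
  | left h => proj1_sig (cid h)
  | right _ => d end.

Lemma chooseDP T (d : T) (P : T -> Prop) : (exists x, P x) -> P (chooseD d P).
Proof.
move=> h; rewrite /chooseD; case: pselect => [h'|//].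
exact: (proj2_sig (cid h')).
Qed.

Definition lastD (V : Type) (d : V) (s : list V) := List.last s d.
Lemma lastD_snoc V (d : V) s v : lastD d (app s (v :: nil)) = v.
Proof. by rewrite /lastD List.last_last. Qed.

Lemma chooseD_or T (d : T) (P : T -> Prop) : P (chooseD d P) \/ chooseD d P = d.
Proof.
rewrite /chooseD; case: pselect => [h'|_]; [left; exact: (proj2_sig (cid h'))|by right].
Qed.

Lemma tau_pre V U0 (d : V) (r : list V -> set U0 -> V) (a : nat -> set U0) n :
  lastD d (run r (prefixS a n.+1)) = r (run r (Defs.prefix a n)) (a n).
Proof. by rewrite (_ : prefixS a n.+1 = Defs.prefix a n.+1) // pre_S run_snoc lastD_snoc. Qed.

Lemma range_ext T U (f g : T -> U) : (forall n, f n = g n) -> range f = range g.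
Proof. by move=> h; rewrite (funext h). Qed.

Section Topo.
Variable X : topologicalType.
Notation CO := (clopen_covers X).
Notation CX := (clopen_nbhd_families X).

Lemma clopenT' : clopen [set: X].
Proof. split; [exact: openT | exact: closedT]. Qed.

Lemma CX_inv a : CX a -> exists x : X, a = clopen_nbhds x.
Proof. by case=> x _ <-; exists x. Qed.

Lemma CX_nbhd (x : X) : CX (clopen_nbhds x).
Proof. by exists x. Qed.

Lemma nbhd_in (x : X) B : clopen B -> B x -> clopen_nbhds x B.
Proof. by move=> cB Bx; split => //; split => //; exists x. Qed.

Lemma UCX B : UnionFam CX B -> clopen B /\ B !=set0.
Proof. by case=> a /CX_inv [x ->] [cB [ne _]]. Qed.

Lemma UCX' (x : X) B : clopen B -> B x -> UnionFam CX B.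
Proof. by move=> cB Bx; exists (clopen_nbhds x); [exact: CX_nbhd | exact: nbhd_in]. Qed.

Lemma UCO B : clopen B -> UnionFam CO B.
Proof.
move=> cB; exists [set C | C = B \/ C = setT]; last by left.
split; first by move=> A [->|->] //; exact: clopenT'.
by apply/seteqP; split => y // _; exists [set: X]; [right|].
Qed.

Lemma CO_clopen U A : CO U -> U A -> clopen A.
Proof. by case=> h _; apply: h. Qed.

Lemma CO_cover U (x : X) : CO U -> exists2 A, U A & A x.
Proof. by case=> _ hU; have : UnionFam U x by rewrite hU. Qed.

Lemma key (g : set (set X) -> set X) : (forall U, CO U -> U (g U)) ->
  exists x : X, forall B, clopen B -> B x -> exists U, CO U /\ g U = B.
Proof.
move=> hg; apply: contrapT => /forallNP H.
pose Us := [set B | clopen B /\ ~ exists U, CO U /\ g U = B].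
have COs : CO Us.
  split; first by move=> A [].
  apply/seteqP; split => y // _.
  have /existsNP [B /not_implyP [cB /not_implyP [By nB]]] := H y.
  by exists B.
have [_ ] := hg _ COs; apply; exists Us; split => //.
Qed.



Lemma dir1 : AliceHasWS CO CO -> BobHasWS CX (negB CX CO).
Proof.
case=> sigma [HS Hw].
pose r := fun p (a : set (set X)) => chooseD setT (fun B => sigma p B /\ a B /\ clopen B).
have rc : forall p a, clopen (r p a).
  move=> p a; rewrite /r; case: (chooseD_or setT (fun B => sigma p B /\ a B /\ clopen B)) => [[_ [_ //]]|->].
  exact: clopenT'.
have rs : forall s a, CX a -> sigma (run r s) (r (run r s) a) /\ a (r (run r s) a).
  move=> s a /CX_inv [x ->].
  have hF : Forall (UnionFam CO) (run r s) by apply: run_Forall => p w; apply: UCO.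
  have [A sA Ax] := CO_cover x (HS _ hF).
  have cA := CO_clopen (HS _ hF) sA.
  have [h1 [h2 _]] := @chooseDP _ setT (fun B => sigma (run r s) B /\ clopen_nbhds x B /\ clopen B)
    (ex_intro _ A (conj sA (conj (nbhd_in cA Ax) cA))).
  by [].
exists (fun s => lastD setT (run r s)); split.
  by move=> s a _ Ha; rewrite run_snoc lastD_snoc; case: (rs s a Ha).
move=> a Ha.
rewrite (range_ext (fun n => tau_pre setT r a n)).
set y := fun n => _.
split.
  by move=> B [n _ <-]; exists (a n) => //; case: (rs (Defs.prefix a n) (a n) (Ha n)).
apply: Hw => n; rewrite /y -run_prefix.
by case: (rs (Defs.prefix a n) (a n) (Ha n)).
Qed.

Lemma dir2 : BobHasWS CX (negB CX CO) -> AliceHasWS CO CO.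
Proof.
case=> tau [HS Hw].
case: (pselect (exists x : X, True)) => [[x0 _]|nX].
  pose a0 := clopen_nbhds x0.
  pose f := fun p (B : set X) => chooseD a0 (fun a => CX a /\ tau (app p (a :: nil)) = B).
  have fc : forall p B, CX (f p B).
    move=> p B; rewrite /f; case: (chooseD_or a0 (fun a => CX a /\ tau (app p (a :: nil)) = B)) => [[]//|->].
    exact: CX_nbhd.
  have hF : forall s, Forall CX (run f s) by move=> s; apply: run_Forall.
  exists (fun s => [set tau (app (run f s) (a :: nil)) | a in CX]); split.
    move=> s _; split.
      move=> A [a /CX_inv [x ->] <-].
      by case: (HS (run f s) (clopen_nbhds x) (hF s) (CX_nbhd x)).
    apply/seteqP; split => y // _.
    exists (tau (app (run f s) (clopen_nbhds y :: nil))); first by exists (clopen_nbhds y) => //; exact: CX_nbhd.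
    by case: (HS (run f s) (clopen_nbhds y) (hF s) (CX_nbhd y)) => _ [].
  move=> x Hx.
  pose a := fun n => f (run f (Defs.prefix x n)) (x n).
  have ha : forall n, CX (a n) /\ tau (app (run f (Defs.prefix x n)) (a n :: nil)) = x n.
    move=> n; have [a' Ha' E] := Hx n.
    exact: (@chooseDP _ a0 (fun a => CX a /\ tau (app (run f (Defs.prefix x n)) (a :: nil)) = x n) (ex_intro _ a' (conj Ha' E))).
  have [_ ] := Hw a (fun n => proj1 (ha n)).
  rewrite (_ : range (fun n => tau (prefixS a n.+1)) = range x) //; apply: range_ext => n.
  rewrite (_ : prefixS a n.+1 = Defs.prefix a n.+1) // pre_S.
  by rewrite /a -run_prefix; case: (ha n).
exists (fun _ => set0); split.
  move=> s _; split => // ; apply/seteqP; split => y // _.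
  by exfalso; apply: nX; exists y.
by move=> x /(_ 0).
Qed.

Lemma dir3 : AliceHasWS CX (negB CX CO) -> BobHasWS CO CO.
Proof.
case=> sigma [HS Hw].
have [x0 _] := CX_inv (HS nil (Forall_nil _)).
pose P := fun p (U : set (set X)) B => U B /\ sigma p B /\ clopen B /\ B !=set0.
pose r := fun p U => chooseD setT (P p U).
have rc : forall p U, UnionFam CX (r p U).
  move=> p U; rewrite /r; case: (chooseD_or setT (P p U)) => [[_ [_ [cB [y By]]]]|->].
    exact: UCX' cB By.
  exact: (@UCX' x0 setT clopenT' I).
have rs : forall s U, CO U -> P (run r s) U (r (run r s) U).
  move=> s U HU.
  have hF : Forall (UnionFam CX) (run r s) by apply: run_Forall.
  have [x Ex] := CX_inv (HS _ hF).
  have [A UA Ax] := CO_cover x HU.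
  have cA := CO_clopen HU UA.
  apply: (@chooseDP _ setT (P (run r s) U)); exists A; split => //; split.
    by rewrite Ex; exact: nbhd_in.
  by split => //; exists x.
exists (fun s => lastD setT (run r s)); split.
  by move=> s a _ Ha; rewrite run_snoc lastD_snoc; case: (rs s a Ha).
move=> a Ha.
rewrite (range_ext (fun n => tau_pre setT r a n)).
set y := fun n => _.
apply: contrapT => nC; apply: (Hw y).
  move=> n; rewrite /y -run_prefix; by case: (rs (Defs.prefix a n) (a n) (Ha n)) => _ [].
split => //.
by move=> B [n _ <-]; apply: rc.
Qed.

Lemma dir4 : BobHasWS CO CO -> AliceHasWS CX (negB CX CO).
Proof.
case=> tau [HS Hw].
have keyp : forall p, Forall CO p -> exists x : X, forall B, clopen B -> B x ->
    exists U, CO U /\ tau (app p (U :: nil)) = B.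
  by move=> p hp; apply: key => U HU; apply: HS.
have [x0 _] := keyp nil (Forall_nil _).
pose U0 := [set A : set X | A = setT].
have CU0 : CO U0.
  split; first by move=> A ->; exact: clopenT'.
  by apply/seteqP; split => y // _; exists setT.
pose f := fun p (B : set X) => chooseD U0 (fun U => CO U /\ tau (app p (U :: nil)) = B).
have fc : forall p B, CO (f p B).
  move=> p B; rewrite /f; case: (chooseD_or U0 (fun U => CO U /\ tau (app p (U :: nil)) = B)) => [[]//|->].
  exact: CU0.
have hF : forall s, Forall CO (run f s) by move=> s; apply: run_Forall.
pose Q := fun p (x : X) => forall B, clopen B -> B x -> exists U, CO U /\ tau (app p (U :: nil)) = B.
pose pt := fun p => chooseD x0 (Q p).
exists (fun s => clopen_nbhds (pt (run f s))); split.
  by move=> s _; exact: CX_nbhd.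
move=> x Hx.
pose a := fun n => f (run f (Defs.prefix x n)) (x n).
have ha : forall n, CO (a n) /\ tau (app (run f (Defs.prefix x n)) (a n :: nil)) = x n.
  move=> n.
  have hQ : Q (run f (Defs.prefix x n)) (pt (run f (Defs.prefix x n))).
    exact: (@chooseDP _ x0 (Q _) (keyp _ (hF _))).
  have [cB [_ Bx]] := Hx n.
  have [U [HU E]] := hQ _ cB Bx.
  exact: (@chooseDP _ U0 (fun U => CO U /\ tau (app (run f (Defs.prefix x n)) (U :: nil)) = x n) (ex_intro _ U (conj HU E))).
have := Hw a (fun n => proj1 (ha n)).
rewrite (_ : range (fun n => tau (prefixS a n.+1)) = range x); last first.
  apply: range_ext => n.
  rewrite (_ : prefixS a n.+1 = Defs.prefix a n.+1) // pre_S.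
  by rewrite /a -run_prefix; case: (ha n).
by move=> hC [].
Qed.

Lemma dir5 : AliceHasWPre CO CO -> BobHasWMarkov CX (negB CX CO).
Proof.
case=> sigma [HS Hw].
pose tau := fun (a : set (set X)) n => chooseD setT (fun B => sigma n B /\ a B).
have ts : forall a n, CX a -> sigma n (tau a n) /\ a (tau a n).
  move=> a n /CX_inv [x ->].
  have [A sA Ax] := CO_cover x (HS n).
  exact: (@chooseDP _ setT (fun B => sigma n B /\ clopen_nbhds x B) (ex_intro _ A (conj sA (nbhd_in (CO_clopen (HS n) sA) Ax)))).
exists tau; split.
  by move=> a n Ha; case: (ts a n Ha).
move=> a Ha; split.
  by move=> B [n _ <-]; exists (a n) => //; case: (ts (a n) n (Ha n)).
by apply: Hw => n; case: (ts (a n) n (Ha n)).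
Qed.

Lemma dir6 : BobHasWMarkov CX (negB CX CO) -> AliceHasWPre CO CO.
Proof.
case=> tau [HS Hw].
exists (fun n => [set tau a n | a in CX]); split.
  move=> n; split.
    by move=> A [a /CX_inv [x ->] <-]; case: (HS (clopen_nbhds x) n (CX_nbhd x)).
  apply/seteqP; split => y // _.
  exists (tau (clopen_nbhds y) n); first by exists (clopen_nbhds y) => //; exact: CX_nbhd.
  by case: (HS (clopen_nbhds y) n (CX_nbhd y)) => _ [].
move=> x Hx.
have hx : forall n, exists a, CX a /\ tau a n = x n by move=> n; case: (Hx n) => a ? ?; exists a.
have [a ha] := choice hx.
have [_ ] := Hw a (fun n => proj1 (ha n)).
rewrite (_ : range (fun n => tau (a n) n) = range x) //; apply: range_ext => n.
by case: (ha n).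
Qed.

Lemma dir7 : AliceHasWPre CX (negB CX CO) -> BobHasWMarkov CO CO.
Proof.
case=> sigma [HS Hw].
pose tau := fun (U : set (set X)) n => chooseD setT (fun B => U B /\ sigma n B).
have ts : forall U n, CO U -> U (tau U n) /\ sigma n (tau U n).
  move=> U n HU; have [x Ex] := CX_inv (HS n).
  have [A UA Ax] := CO_cover x HU.
  apply: (@chooseDP _ setT (fun B => U B /\ sigma n B)); exists A; split => //.
  by rewrite Ex; exact: nbhd_in (CO_clopen HU UA) Ax.
exists tau; split.
  by move=> a n Ha; case: (ts a n Ha).
move=> a Ha.
apply: contrapT => nC; apply: (Hw (fun n => tau (a n) n)).
  by move=> n; case: (ts (a n) n (Ha n)).
split => //.
by move=> B [n _ <-]; exists (sigma n) => //; case: (ts (a n) n (Ha n)).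
Qed.

Lemma dir8 : BobHasWMarkov CO CO -> AliceHasWPre CX (negB CX CO).
Proof.
case=> tau [HS Hw].
have keyn : forall n, exists x : X, forall B, clopen B -> B x ->
    exists U, CO U /\ tau U n = B.
  by move=> n; apply: key => U HU; apply: HS.
have [pt hpt] := choice keyn.
exists (fun n => clopen_nbhds (pt n)); split.
  by move=> n; exact: CX_nbhd.
move=> x Hx.
have hU : forall n, exists U, CO U /\ tau U n = x n.
  by move=> n; have [cB [_ Bx]] := Hx n; apply: hpt.
have [a ha] := choice hU.
have := Hw a (fun n => proj1 (ha n)).
rewrite (_ : range (fun n => tau (a n) n) = range x); last first.
  by apply: range_ext => n; case: (ha n).
by move=> hC [].
Qed.

End Topo.

Theorem corollary3p6 (X : topologicalType) :
  ((AliceHasWS (clopen_covers X) (clopen_covers X) <->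
      BobHasWS (clopen_nbhd_families X)
        (negB (clopen_nbhd_families X) (clopen_covers X))) /\
   (AliceHasWS (clopen_nbhd_families X)
        (negB (clopen_nbhd_families X) (clopen_covers X)) <->
      BobHasWS (clopen_covers X) (clopen_covers X))) /\
  ((AliceHasWPre (clopen_covers X) (clopen_covers X) <->
      BobHasWMarkov (clopen_nbhd_families X)
        (negB (clopen_nbhd_families X) (clopen_covers X))) /\
   (AliceHasWPre (clopen_nbhd_families X)
        (negB (clopen_nbhd_families X) (clopen_covers X)) <->
      BobHasWMarkov (clopen_covers X) (clopen_covers X))).
Proof.
split; split; split.
- exact: dir1.
- exact: dir2.
- exact: dir3.
- exact: dir4.
- exact: dir5.
- exact: dir6.
- exact: dir7.
- exact: dir8.
Qed.
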